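(* Let $M$ be a magma satisfying $xy = xz$ and $(xy)z = xy$ for all $x,y,z\in M$. Then $M$ satisfies $xy = zu$ for all $x,y,z,u\in M$ if and only if $M$ avoids the magma $2_{LZ}$ on $\{0,1\}$ with Cayley table \[ \begin{array}{c|cc} 2_{LZ} & 0 & 1 \\ \hline 0 & 0 & 0 \\ 1 & 1 & 1 \end{array}. \]
   Context: A magma is a nonempty set with a binary operation, written by juxtaposition. A magma $M$ avoids a magma $F$ if no submagma of $M$ is isomorphic to $F$. *)

(* Defs.v *)
From Stdlib Require Import Bool.

Record magma := Magma {
  carrier :> Type;
  mop : carrier -> carrier -> carrier;
  inhabited_carrier : inhabited carrier
}.

Definition is_submagma (M : magma) (S : M -> Prop) : Prop :=
  (exists x, S x) /\ (forall x y, S x -> S y -> S (mop M x y)).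

Definition submagma_iso (F M : magma) (S : M -> Prop) : Prop :=
  exists f : F -> M,
    (forall a, S (f a)) /\
    (forall a b, f a = f b -> a = b) /\
    (forall y, S y -> exists a, f a = y) /\
    (forall a b, f (mop F a b) = mop M (f a) (f b)).

Definition avoids (M F : magma) : Prop :=
  ~ exists S : M -> Prop, is_submagma M S /\ submagma_iso F M S.

(* The left-zero magma on {0,1} (here bool, false = 0, true = 1): x y = x. *)
Definition magma_2LZ : magma := Magma bool (fun x _ => x) (inhabits false).

(* Main.v *)
Require Import Defs.
From Stdlib Require Import Classical.

Theorem mainTheorem3 (M : magma) :
  (forall x y z : M, mop M x y = mop M x z) ->
  (forall x y z : M, mop M (mop M x y) z = mop M x y) ->
  ((forall x y z u : M, mop M x y = mop M z u) <-> avoids M magma_2LZ).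
Proof.
  intros H1 H2. split.
  - intros Hall [S [_ [f [_ [Hinj [_ Hhom]]]]]].
    assert (E1 := Hhom false true). assert (E2 := Hhom true false).
    simpl in E1, E2.
    assert (f false = f true) as E.
    { rewrite E1, E2. apply Hall. }
    apply Hinj in E. discriminate.
  - intros Hav x y z u.
    destruct (classic (mop M x y = mop M z u)) as [h|h]; [exact h|].
    exfalso. apply Hav.
    set (a := mop M x y). set (b := mop M z u).
    exists (fun w => w = a \/ w = b). split.
    + split. exists a; left; reflexivity.
      intros p q [->| ->] _; [left|right]; apply H2.
    + exists (fun t : bool => if t then b else a). split; [|split; [|split]].
      * intros [|]; [right|left]; reflexivity.
      * intros [|] [|] e; try reflexivity; exfalso; apply h; [symmetry|]; exact e.
      * intros w [->| ->]; [exists false|exists true]; reflexivity.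
      * intros [|] c; simpl; symmetry; apply H2.
Qed.
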